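(* Assume $\lambda_2>\mu$ and $M>\lambda_2-\mu$ (so $\widetilde\lambda>0$), and let $\widehat C>0$. Then for all sufficiently small $\varepsilon>0$ the following holds. Suppose $(n_{1a},n_{1d},n_2)\in(0,\infty)^3$ satisfies - $n_2\in(\bar n_2-2\sqrt\varepsilon,\bar n_2+2\sqrt\varepsilon)$, - $n_{1a}+n_{1d}\in(\varepsilon/\widehat C,\sqrt\varepsilon)$, - $n_{1d}/n_{1a}=\pi_{1d}/\pi_{1a}$. Then $$\frac{pC(n_{1a}+n_2)}{\kappa\mu+\sigma}>\frac{n_{1d}}{n_{1a}}>\frac{\mu-\lambda_1+C(n_2+n_{1a})+\tau n_2}{\sigma}.$$
   Context: Let $\lambda_1,\lambda_2,\mu,C,\sigma,\tau>0$, $p\in(0,1)$ and $\kappa\ge 0$. Set $$M:=\frac{Cp\sigma}{\tau(\kappa\mu+\sigma)}(\lambda_2-\mu)+\frac{C}{\tau}(\lambda_1-\lambda_2),\qquad \bar n_2:=\max(\lambda_2-\mu,0)/C.$$ Let $$J:=\begin{pmatrix}\lambda_1-\lambda_2-\frac{\tau}{C}(\lambda_2-\mu) & p(\lambda_2-\mu)\\ \sigma & -\kappa\mu-\sigma\end{pmatrix}.$$ Let $\widetilde\lambda$ be the eigenvalue of $J$ with the largest real part. When $\lambda_2>\mu$, $\widetilde\lambda$ is real (its Perron root). Let $(\pi_{1a},\pi_{1d})$ be the left eigenvector of $J$ for $\widetilde\lambda$ with positive entries and $\pi_{1a}+\pi_{1d}=1$. *)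

(* Defs.v *)
From Stdlib Require Import Reals.
From Coquelicot Require Import Coquelicot.
Open Scope R_scope.

Definition J11 (l1 l2 mu C tau : R) : R := l1 - l2 - tau / C * (l2 - mu).
Definition J12 (l2 mu p : R) : R := p * (l2 - mu).
Definition J21 (sigma : R) : R := sigma.
Definition J22 (mu sigma kappa : R) : R := - kappa * mu - sigma.

Definition Mconst (l1 l2 mu C sigma tau p kappa : R) : R :=
  C * p * sigma / (tau * (kappa * mu + sigma)) * (l2 - mu) + C / tau * (l1 - l2).
Definition nbar2 (l2 mu C : R) : R := Rmax (l2 - mu) 0 / C.

Definition is_eig2 (a b c d : R) (z : C) : Prop :=
  Cminus (Cmult (Cminus (RtoC a) z) (Cminus (RtoC d) z)) (RtoC (b * c)) = RtoC 0.

Definition is_top_eig2 (a b c d : R) (lt : C) : Prop :=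
  is_eig2 a b c d lt /\ forall z : C, is_eig2 a b c d z -> Re z <= Re lt.

Definition is_left_eigvec2 (a b c d lt x y : R) : Prop :=
  x * a + y * c = lt * x /\ x * b + y * d = lt * y.

(* Main.v *)
Require Import Defs.
From Stdlib Require Import Reals Lra Psatz.
From Coquelicot Require Import Coquelicot.
Open Scope R_scope.

Theorem lemmaD4 (l1 l2 mu C sigma tau p kappa Chat : R)
  (Hl1 : 0 < l1) (Hl2 : 0 < l2) (Hmu : 0 < mu) (HC : 0 < C)
  (Hsigma : 0 < sigma) (Htau : 0 < tau) (Hp0 : 0 < p) (Hp1 : p < 1)
  (Hkappa : 0 <= kappa)
  (Hl2mu : l2 > mu)
  (HM : Mconst l1 l2 mu C sigma tau p kappa > l2 - mu)
  (HChat : 0 < Chat)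
  (lt pi1a pi1d : R)
  (Hlt : is_top_eig2 (J11 l1 l2 mu C tau) (J12 l2 mu p) (J21 sigma)
           (J22 mu sigma kappa) (RtoC lt))
  (Hpi : is_left_eigvec2 (J11 l1 l2 mu C tau) (J12 l2 mu p) (J21 sigma)
           (J22 mu sigma kappa) lt pi1a pi1d)
  (Hpia : 0 < pi1a) (Hpid : 0 < pi1d) (Hpisum : pi1a + pi1d = 1) :
  exists eps0 : R, 0 < eps0 /\
    forall eps : R, 0 < eps < eps0 ->
    forall n1a n1d n2 : R, 0 < n1a -> 0 < n1d -> 0 < n2 ->
      nbar2 l2 mu C - 2 * sqrt eps < n2 < nbar2 l2 mu C + 2 * sqrt eps ->
      eps / Chat < n1a + n1d < sqrt eps ->
      n1d / n1a = pi1d / pi1a ->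
      p * C * (n1a + n2) / (kappa * mu + sigma) > n1d / n1a /\
      n1d / n1a > (mu - l1 + C * (n2 + n1a) + tau * n2) / sigma.
Proof.
  destruct Hpi as [E1 E2].
  unfold J11, J12, J21, J22 in E1, E2.
  unfold Mconst in HM.
  set (KK := kappa * mu + sigma).
  assert (HK : 0 < KK) by (unfold KK; nra).
  set (a := l1 - l2 - tau / C * (l2 - mu)).
  fold a in E1.
  set (r := pi1d / pi1a).
  assert (Hr : 0 < r) by (unfold r; apply Rdiv_lt_0_compat; lra).
  assert (Hpd : pi1d = r * pi1a) by (unfold r; field; lra).
  rewrite Hpd in E1, E2.
  assert (R1 : a + r * sigma = lt) by (apply Rmult_eq_reg_r with pi1a; nra).
  assert (R2 : p * (l2 - mu) + r * (- kappa * mu - sigma) = lt * r)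
    by (apply Rmult_eq_reg_r with pi1a; nra).
  (* det < 0 *)
  assert (Hdet : a * KK + p * sigma * (l2 - mu) > 0).
  { assert (Ha : a + p * sigma * (l2 - mu) / KK > 0).
    { unfold a.
      assert (H1 : C / tau * (l1 - l2 - tau / C * (l2 - mu) + p * sigma * (l2 - mu) / KK) > 0).
      { replace (C / tau * (l1 - l2 - tau / C * (l2 - mu) + p * sigma * (l2 - mu) / KK))
          with (C * p * sigma / (tau * KK) * (l2 - mu) + C / tau * (l1 - l2) - (l2 - mu))
          by (field; lra).
        unfold KK; lra. }
      assert (0 < C / tau) by (apply Rdiv_lt_0_compat; lra).
      nra. }
    assert (Hx : p * sigma * (l2 - mu) / KK * KK = p * sigma * (l2 - mu)) by (field; lra).
    nra. }
  assert (Hltpos : lt > 0).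
  { assert (Hlk : lt + KK > 0).
    { assert (p * (l2 - mu) > 0) by nra. unfold KK in *. nra. }
    destruct (Rle_or_lt lt 0) as [Hle|]; [|lra].
    exfalso.
    assert (F : (lt - a) * (lt + KK) = p * sigma * (l2 - mu)).
    { assert (H1 : r * sigma = lt - a) by lra. rewrite <- H1.
      assert (H2 : r * (lt + KK) = p * (l2 - mu)) by (unfold KK; lra).
      replace (r * sigma * (lt + KK)) with (sigma * (r * (lt + KK))) by ring.
      rewrite H2; ring. }
    assert (P1 : (lt + KK) * (a * KK + p * sigma * (l2 - mu)) > 0) by (apply Rmult_gt_0_compat; lra).
    assert (P2 : lt * (p * sigma * (l2 - mu)) <= 0).
    { assert (p * sigma * (l2 - mu) > 0) by (assert (p*sigma>0) by nra; nra). nra. }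
    assert (P3 : KK * (lt * (lt + KK)) <= 0).
    { assert (lt * (lt + KK) <= 0) by nra. nra. }
    nra. }
  set (s0 := Rmin (r * lt / (2 * p * C)) (lt / (3 * C + 2 * tau))).
  assert (Hs0 : 0 < s0).
  { unfold s0; apply Rmin_glb_lt; apply Rdiv_lt_0_compat; nra. }
  exists (s0 * s0). split; [nra|].
  intros eps [He0 He1] n1a n1d n2 Hn1a Hn1d Hn2 [Hb1 Hb2] [Hc1 Hc2] Hrat.
  rewrite Hrat. fold r.
  set (s := sqrt eps).
  fold s in Hb1, Hb2, Hc2.
  assert (Hs : s < s0).
  { unfold s. rewrite <- (sqrt_square s0) by lra. apply sqrt_lt_1_alt. lra. }
  assert (Hs1 : s * (2 * p * C) <= r * lt).
  { assert (s < r * lt / (2 * p * C)) by (eapply Rlt_le_trans; [apply Hs| apply Rmin_l]).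
    assert (0 < 2 * p * C) by nra.
    apply Rmult_lt_compat_r with (r := 2 * p * C) in H; auto.
    replace (r * lt / (2 * p * C) * (2 * p * C)) with (r * lt) in H by (field; nra). lra. }
  assert (Hs2 : s * (3 * C + 2 * tau) <= lt).
  { assert (s < lt / (3 * C + 2 * tau)) by (eapply Rlt_le_trans; [apply Hs| apply Rmin_r]).
    assert (0 < 3 * C + 2 * tau) by nra.
    apply Rmult_lt_compat_r with (r := 3 * C + 2 * tau) in H; auto.
    replace (lt / (3 * C + 2 * tau) * (3 * C + 2 * tau)) with lt in H by (field; nra). lra. }
  assert (Hnb : nbar2 l2 mu C * C = l2 - mu).
  { unfold nbar2. rewrite Rmax_left by lra. field; lra. }
  assert (Hsp : 0 <= s) by (unfold s; apply sqrt_pos).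
  split.
  - apply Rlt_gt. apply Rmult_lt_reg_r with KK; auto.
    replace (p * C * (n1a + n2) / KK * KK) with (p * C * (n1a + n2)) by (field; lra).
    assert (p * C * n2 > p * C * (nbar2 l2 mu C - 2 * s)).
    { apply Rmult_lt_compat_l; nra. }
    assert (Q1 : r * KK = p * (l2 - mu) - lt * r) by (unfold KK; lra).
    assert (Q2 : p * C * (nbar2 l2 mu C - 2 * s) = p * (l2 - mu) - s * (2 * p * C)).
    { rewrite <- Hnb. ring. }
    assert (Q3 : p * C * n1a > 0) by (assert (p*C>0) by nra; nra).
    assert (Q4 : p * C * (n1a + n2) = p * C * n1a + p * C * n2) by ring.
    lra.
  - apply Rlt_gt. apply Rmult_lt_reg_r with sigma; auto.
    replace ((mu - l1 + C * (n2 + n1a) + tau * n2) / sigma * sigma)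
      with (mu - l1 + C * (n2 + n1a) + tau * n2) by (field; lra).
    assert (Hta : tau * (nbar2 l2 mu C) = tau / C * (l2 - mu)).
    { rewrite <- Hnb. field; lra. }
    assert (C * n2 < C * (nbar2 l2 mu C + 2 * s)) by (apply Rmult_lt_compat_l; lra).
    assert (tau * n2 < tau * (nbar2 l2 mu C + 2 * s)) by (apply Rmult_lt_compat_l; lra).
    assert (C * n1a < C * s) by (apply Rmult_lt_compat_l; lra).
    assert (Q1 : r * sigma = lt - a) by lra.
    assert (Q2 : C * (nbar2 l2 mu C + 2 * s) + tau * (nbar2 l2 mu C + 2 * s) + C * s
       = (l2 - mu) + tau / C * (l2 - mu) + s * (3 * C + 2 * tau)).
    { rewrite <- Hta. rewrite <- Hnb. ring. }
    unfold a in Q1. lra.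
Qed.
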